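(* Let $\alpha$ be a partition all of whose parts are odd (possibly $\alpha$ is the empty partition). Let $t\ge 0$ be an integer, let $\mu=(\alpha,2,2^2,\ldots,2^{t})$ and $\mu'=(\alpha,2^{t+1})$, and let $n=|\mu|$ (so $|\mu'|=n+2$). Then for every integer $j$ with $0\le j\le n-j$ we have $$\chi^{(n-j,j)}(\mu)=\chi^{(n+2-j,1^j)}(\mu').$$
   Context: A partition of $n\in\mathbb{N}_0$ is a weakly decreasing sequence of positive integers (its parts) summing to $n$; $|\lambda|$ denotes the sum of the parts; the only partition of $0$ is the empty partition. For a partition $\alpha$ and positive integers $a,b,\ldots$, $(\alpha,a,b,\ldots)$ denotes the partition whose parts are the parts of $\alpha$ together with $a,b,\ldots$; in particular $(\alpha,2,2^2,\ldots,2^t)$ has the parts of $\alpha$ together with the parts $2,4,8,\ldots,2^t$ (one each, none if $t=0$), and $(\alpha,2^{t+1})$ has the parts of $\alpha$ together with one part equal to $2^{t+1}$. In $(n+2-j,1^j)$ the exponent denotes multiplicity: the hook partition with first part $n+2-j$ followed by $j$ parts equal to $1$. For a partition $\lambda$ of $n$, $\chi^\lambda$ is the irreducible complex character of the symmetric group $S_n$ labelled by $\lambda$ (standard labelling), and $\chi^\lambda(\mu)$ is its value on the conjugacy class of permutations of cycle type $\mu$; for $n=0$, $\chi^{(0)}$ of the empty class is $1$. *)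

(* Defs.v *)
From HB Require Import structures.
From mathcomp Require Import all_boot all_order all_algebra all_fingroup.
Set Implicit Arguments. Unset Strict Implicit. Unset Printing Implicit Defensive.
Import GRing.Theory.
Local Open Scope ring_scope.

Definition is_partition (s : seq nat) : bool :=
  sorted geq s && all (fun x => (0 < x)%N) s.

(* Irreducible character chi^la of S_n evaluated on the class of cycle type mu,
   defined by the Frobenius character formula with l := size la variables:
   chi^la(mu) = coefficient of x^(la + delta) in a_delta * p_mu,
   delta = (l-1, l-2, ..., 0), a_delta = sum_s sgn(s) prod_i x_i^(delta_(s i)),
   p_mu = prod_k (x_1^(mu_k) + ... + x_l^(mu_k)).
   Expanding p_mu, the coefficient of x^beta in p_mu is the number of maps f
   from the parts of mu to the variables with sum_(k | f k = i) mu_k = beta_i. *)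
Definition chi (la mu : seq nat) : int :=
  \sum_(s : 'S_(size la))
     (-1) ^+ (odd_perm s) *
     (#|[set f : {ffun 'I_(size mu) -> 'I_(size la)} |
         [forall i : 'I_(size la),
            ((\sum_(k < size mu | f k == i) nth 0%N mu k)
               + ((size la).-1 - s i))%N
            == (nth 0%N la i + ((size la).-1 - i))%N]]|)%:Z.

Definition drop_zero_parts (s : seq nat) : seq nat := [seq x <- s | (0 < x)%N].

(* Main.v *)
Require Import Defs.
From mathcomp Require Import all_boot all_order all_algebra all_fingroup.
From mathcomp Require Import zify ring lra.
Set Implicit Arguments. Unset Strict Implicit. Unset Printing Implicit Defensive.
Import GRing.Theory.
Local Open Scope ring_scope.

Definition Sv {l : nat} (mu : seq nat) (f : {ffun 'I_(size mu) -> 'I_l}) (i : 'I_l) : nat :=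
  (\sum_(k < size mu | f k == i) nth 0%N mu k)%N.
Arguments Sv {l} mu f i.

Definition Chi (l : nat) (T : nat -> nat) (mu : seq nat) : int :=
  \sum_(s : 'S_l) (-1) ^+ (odd_perm s) *
    (#|[set f : {ffun 'I_(size mu) -> 'I_l} |
        [forall i : 'I_l, (Sv mu f i + (l.-1 - s i))%N == T i]]|)%:Z.

Lemma chiE la mu : chi la mu = Chi (size la) (fun n => nth 0%N la n + ((size la).-1 - n))%N mu.
Proof. by []. Qed.

Lemma card_sum (U : finType) (P : pred U) : #|[set x | P x]| = (\sum_x (P x : nat))%N.
Proof. rewrite -sum1_card big_mkcond; apply: eq_bigr => x _; rewrite inE; by case: (P x). Qed.

Lemma card_sumS (U : finType) (A : {set U}) : #|A| = (\sum_x (x \in A : nat))%N.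
Proof. by rewrite -sum1_card big_mkcond; apply: eq_bigr => x _; case: (x \in A). Qed.

Lemma card_reindex (U : finType) (P Q : pred U) (h : U -> U) :
  injective h -> (forall x, Q (h x) = P x) -> #|[set x | P x]| = #|[set x | Q x]|.
Proof.
move=> hI hQP; rewrite !card_sum [in RHS](reindex_inj hI) /=.
by apply: eq_bigr => x _; rewrite hQP.
Qed.

Lemma Chi_perm l (T T' : nat -> nat) mu (tau : 'S_l) :
  (forall i : 'I_l, T' i = T (tau i)) -> Chi l T' mu = (-1) ^+ (odd_perm tau) * Chi l T mu.
Proof.
move=> HT; rewrite /Chi mulr_sumr (reindex_inj (mulgI tau)) /=.
apply: eq_bigr => s _.
rewrite odd_permM signr_addb -mulrA; congr (_ * (_ * Posz _)).
have Sh : forall (f : {ffun 'I_(size mu) -> 'I_l}) i, Sv mu [ffun k => tau (f k)] (tau i) = Sv mu f i.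
  by move=> f i; rewrite /Sv; apply: eq_bigl => k; rewrite ffunE (inj_eq (@perm_inj _ tau)).
apply: (@card_reindex _ (fun f : {ffun 'I_(size mu) -> 'I_l} => [forall i, (Sv mu f i + (l.-1 - (tau * s)%g i))%N == T' i])
   (fun f : {ffun 'I_(size mu) -> 'I_l} => [forall i, (Sv mu f i + (l.-1 - s i))%N == T i]) (fun f => [ffun k => tau (f k)])).
- move=> f g /ffunP E; apply/ffunP => k; move: (E k); rewrite !ffunE; exact: perm_inj.
- move=> f; apply/forallP/forallP => H i.
  + by rewrite permM HT -Sh; exact: H.
  + by have := H (tau^-1 i)%g; rewrite permM permKV HT permKV -Sh permKV.
Qed.

Lemma Chi_ext l (T T' : nat -> nat) mu :
  (forall i : 'I_l, T' i = T i) -> Chi l T' mu = Chi l T mu.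
Proof.
move=> H; rewrite (@Chi_perm l T T' mu 1%g) ?odd_perm1 ?mul1r // => i.
by rewrite perm1.
Qed.

Lemma Chi_rep l (T : nat -> nat) mu (p q : 'I_l) : p != q -> T p = T q -> Chi l T mu = 0.
Proof.
move=> pq HT.
have H : Chi l T mu = - Chi l T mu.
  rewrite {1}(@Chi_perm l T T mu (tperm p q)) ?odd_tperm ?pq ?expr1 ?mulN1r // => i.
  by case: tpermP => [->|->|//]; rewrite HT.
lia.
Qed.

Lemma Chi_nil l (T : nat -> nat) : Chi l T [::] =
  \sum_(s : 'S_l) (-1) ^+ odd_perm s * ([forall i : 'I_l, (l.-1 - s i)%N == T i] : nat)%:Z.
Proof.
rewrite /Chi; apply: eq_bigr => s _; congr (_ * Posz _).
rewrite card_sum.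
have E : forall f : {ffun 'I_(size [::]) -> 'I_l}, [forall i, (Sv [::] f i + (l.-1 - s i))%N == T i]
     = [forall i : 'I_l, (l.-1 - s i)%N == T i].
  by move=> f; apply: eq_forallb => i; rewrite /Sv big_ord0.
under eq_bigr do rewrite E.
by rewrite sum_nat_const card_ffun card_ord /= card_ord expn0 mul1n.
Qed.

Lemma Chi_nil_delta l (T : nat -> nat) : (forall i : 'I_l, T i = (l.-1 - i)%N) -> Chi l T [::] = 1.
Proof.
move=> HT; rewrite Chi_nil (bigD1 1%g) //= big1 ?addr0.
- rewrite odd_perm1 /= mul1r.
  have -> : [forall i : 'I_l, (l.-1 - (1%g : 'S_l) i)%N == T i] by apply/forallP => i; rewrite perm1 HT.
  done.
- move=> s Hs.
  have -> : [forall i : 'I_l, (l.-1 - s i)%N == T i] = false.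
    apply/negbTE/forallP => H; move/eqP: Hs; apply; apply/permP => i; rewrite perm1; apply/val_inj => /=.
    have := H i; rewrite HT => /eqP; have := ltn_ord (s i); have := ltn_ord i; lia.
  by rewrite mulr0.
Qed.


Definition hcons {l n : nat} (p : 'I_l * {ffun 'I_n -> 'I_l}) : {ffun 'I_n.+1 -> 'I_l} :=
  [ffun k : 'I_n.+1 => if unlift ord0 k is Some k' then p.2 k' else p.1].

Lemma hcons_bij l n : bijective (@hcons l n).
Proof.
exists (fun f : {ffun 'I_n.+1 -> 'I_l} => (f ord0, [ffun k : 'I_n => f (lift ord0 k)])).
- case=> i0 g /=; rewrite /hcons ffunE unlift_none; congr (_, _).
  by apply/ffunP => k; rewrite !ffunE liftK.
- move=> f; apply/ffunP => k; rewrite /hcons ffunE /=.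
  by case: unliftP => [k'|] ->; rewrite ?ffunE.
Qed.

Lemma Sv_cons l a mu (i0 : 'I_l) (g : {ffun 'I_(size mu) -> 'I_l}) i :
  Sv (a :: mu) (hcons (i0, g)) i = ((i0 == i) * a + Sv mu g i)%N.
Proof.
rewrite /Sv big_mkcond big_ord_recl /= /hcons ffunE unlift_none /=.
rewrite [in RHS]big_mkcond /=; congr (_ + _)%N.
  by case: (i0 == i); rewrite ?mul1n ?mul0n.
by apply: eq_bigr => k _; rewrite ffunE liftK.
Qed.

Lemma card_cons l a mu (d : 'I_l -> nat) (Tv : nat -> nat) :
  #|[set f : {ffun 'I_(size (a :: mu)) -> 'I_l} | [forall i, (Sv (a :: mu) f i + d i)%N == Tv i]]| =
  (\sum_(i0 : 'I_l | (a <= Tv i0)%N) #|[set g : {ffun 'I_(size mu) -> 'I_l} |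
      [forall i : 'I_l, (Sv mu g i + d i)%N == (if val i == val i0 then Tv i - a else Tv i)%N]]|)%N.
Proof.
rewrite card_sumS (reindex _ (onW_bij _ (@hcons_bij l (size mu)))) /=.
transitivity (\sum_(i0 : 'I_l) \sum_(g : {ffun 'I_(size mu) -> 'I_l})
   ([forall i, (Sv (a :: mu) (hcons (i0, g)) i + d i)%N == Tv i] : nat))%N.
  by rewrite pair_bigA; apply: eq_bigr => -[i0 g] _; rewrite inE.
rewrite [in RHS]big_mkcond /=; apply: eq_bigr => i0 _.
rewrite card_sumS.
case: leqP => Ha.
- apply: eq_bigr => g _; rewrite inE; congr nat_of_bool; apply: eq_forallb => i.
  rewrite Sv_cons; case: (eqVneq i0 i) => [<-|ne]; rewrite ?eqxx /=.
    by rewrite mul1n; apply/eqP/eqP; lia.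
  have -> : (val i == val i0) = false by apply/negbTE; rewrite eq_sym; apply: contra ne => /eqP E; apply/eqP/val_inj.
  by rewrite mul0n.
- apply: big1 => g _; apply/eqP; rewrite eqb0; apply/forallP => /(_ i0).
  rewrite Sv_cons eqxx mul1n => /eqP; lia.
Qed.

Lemma Chi_cons l (T : nat -> nat) a mu : Chi l T (a :: mu) =
  \sum_(i0 : 'I_l | (a <= T i0)%N) Chi l (fun n => if n == val i0 then T n - a else T n)%N mu.
Proof.
rewrite /Chi exchange_big /=; apply: eq_bigr => s _.
rewrite (card_cons a mu (fun i => l.-1 - s i)%N) -natz natr_sum mulr_sumr.
by apply: eq_bigr => i0 _; rewrite natz.
Qed.

Definition rotn (p d i : nat) : nat :=
  if (p < i <= p + d)%N then i.-1 else if i == p then (p + d)%N else i.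

Lemma Chi_rot l (T T' : nat -> nat) mu p d : (p + d < l)%N ->
  (forall i : 'I_l, T' i = T (rotn p d i)) -> Chi l T' mu = (-1) ^+ d * Chi l T mu.
Proof.
elim: d p T' => [|d IH] p T' Hl HT.
  rewrite expr0 mul1r; apply: Chi_ext => i; rewrite HT /rotn.
  by case: ifP => H1; [lia|]; case: ifP => H2 //; move/eqP: H2 => ->; rewrite addn0.
have Hp : (p < l)%N by lia.
have Hp1 : (p.+1 < l)%N by lia.
have [l' El] : exists l', l = l'.+1 by exists l.-1; lia.
subst l.
pose tp := tperm (inord p : 'I_l'.+1) (inord p.+1).
rewrite (@Chi_perm l'.+1 (fun n => T (rotn p.+1 d n)) T' mu tp).
- rewrite (IH p.+1) ?odd_tperm; last by lia.
  + have -> : (inord p : 'I_l'.+1) != inord p.+1.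
      by apply/eqP => /(f_equal (@nat_of_ord _)); rewrite !inordK //; lia.
    by rewrite exprS expr1 mulrA.
  + by lia.
- move=> i; rewrite HT; congr T; rewrite /tp.
  case: tpermP => [->|->|].
  + rewrite !inordK // /rotn; (repeat case: ifP => ?); lia.
  + rewrite !inordK // /rotn; (repeat case: ifP => ?); lia.
  + move=> /eqP n1 /eqP n2.
    have m1 : (val i != p) by apply: contra n1 => /eqP E; apply/eqP/val_inj; rewrite /= inordK.
    have m2 : (val i != p.+1) by apply: contra n2 => /eqP E; apply/eqP/val_inj; rewrite /= inordK.
    move: m1 m2; rewrite /rotn; (repeat case: ifP => ?); lia.
Qed.


Definition Np (mu : seq nat) : {poly int} := \prod_(a <- mu) (1 + 'X^a).
Definition T2 (M j : nat) : nat -> nat := fun n => if n == 0%N then (M.+1 - j)%N else j.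

Lemma size_Np mu : (size (Np mu) <= (sumn mu).+1)%N.
Proof.
elim: mu => [|a mu IH]; rewrite /Np ?big_nil ?big_cons ?size_poly1 //.
apply: leq_trans (size_polyMleq _ _) _.
have h1 : (size ((1 + 'X^a)%R : {poly int}) <= a.+1)%N.
  apply: leq_trans (size_polyD _ _) _; rewrite size_poly1 size_polyXn; lia.
move: IH; rewrite /Np /= => IH. have H : forall x y u v : nat, (x <= u.+1 -> y <= v.+1 -> (x + y).-1 <= (u + v).+1)%N by move=> *; lia. exact: H.
Qed.

Lemma coef_sign (k : nat) (p : {poly int}) i : ((-1)^+k * p)`_i = (-1)^+k * p`_i.
Proof.
elim: k => [|k IH]; first by rewrite !expr0 !mul1r.
by rewrite !exprS !mulN1r mulNr coefN IH mulNr.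
Qed.

Lemma two_closed mu j : (j <= (sumn mu).+1)%N -> Chi 2%N (T2 (sumn mu) j) mu = ((1 - 'X) * Np mu)`_j.
Proof.
elim: mu j => [|a mu IH] j Hj.
  rewrite /Np big_nil mulr1 coefB coef1 coefX /=.
  case: j Hj => [|[|j]] Hj //=.
  - by apply: Chi_nil_delta => i; rewrite /T2; case: i => [[|[|i]] Hi] //=.
  - rewrite (@Chi_rot 2%N (fun n => 1 - n)%N _ _ 0 1) //.
      by rewrite (@Chi_nil_delta 2%N) // expr1 mulr1.
    by case => [[|[|i]] Hi] //=.
rewrite /= in Hj.
rewrite Chi_cons big_mkcond big_ord_recl big_ord1 /=.
rewrite /Np big_cons -/(Np mu) mulrA mulrDr mulr1 mulrDl coefD.
rewrite [(_ * 'X^a)%R]mulrC -mulrA coefXnM /T2 /=.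
case: (leqP a ((a + (sumn mu)).+1 - j)) => H1.
- rewrite (@Chi_ext 2%N (T2 (sumn mu) j)); last first.
    by case => [[|[|i]] Hi] //=; rewrite /T2 /=; lia.
  rewrite IH; last by lia.
  congr (_ + _).
  case: (leqP a j) => H2.
  + rewrite (@Chi_ext 2%N (T2 (sumn mu) (j - a))); last first.
      by case => [[|[|i]] Hi] //=; rewrite /T2 /=; lia.
    rewrite IH; last by lia.
    by [].
  + by [].
- have Hz : ((1 - 'X) * Np mu)`_j = 0.
    apply: nth_default; apply: leq_trans (size_polyMleq _ _) _.
    have := size_Np mu; have : (size ((1 - 'X)%R : {poly int}) <= 2)%N.
      by apply: leq_trans (size_polyD _ _) _; rewrite size_polyN size_poly1 size_polyX.
    have H : forall x y : nat, (x <= 2 -> y <= (sumn mu).+1 -> (x + y).-1 <= j)%N by move=> *; lia.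
    move=> h1 h2; exact: H.
  rewrite Hz add0r.
  case: (leqP a j) => H2.
  + rewrite (@Chi_ext 2%N (T2 (sumn mu) (j - a))); last first.
      by case => [[|[|i]] Hi] //=; rewrite /T2 /=; lia.
    rewrite IH; last by lia.
    by rewrite add0r.
  + by rewrite add0r.
Qed.


Definition Th (j M j' : nat) : nat -> nat := fun n =>
  if n == 0%N then (M + j - j')%N else if (n <= j')%N then (j.+1 - n)%N else (j - n)%N.
Definition Rp (mu : seq nat) : {poly int} := \prod_(a <- mu) (1 - (- 'X)^+a).
Definition Pj (j : nat) : {poly int} := \sum_(i < j.+1) (- 'X)^+i.

Lemma coef_Pj j k : (k <= j)%N -> (Pj j)`_k = (-1)^+k.
Proof.
move=> hk; rewrite /Pj coef_sum.
rewrite (bigD1 (inord k)) //= big1 ?addr0.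
- by rewrite (exprNn 'X) coef_sign coefXn inordK // eqxx mulr1.
- move=> i /eqP ne; rewrite (exprNn 'X) coef_sign coefXn.
  have -> : (k == i) = false.
    by apply/negbTE/eqP => E; apply: ne; apply/val_inj; rewrite /= inordK // E.
  by rewrite mulr0.
Qed.

Lemma hook_rep j M j' a mu (i0 : 'I_j.+1) : (j' <= j)%N -> (0 < a)%N -> (nat_of_ord i0 != 0)%N ->
  (a <= Th j M j' i0)%N -> ~~ ((a <= j')%N && (nat_of_ord i0 == j'.+1 - a)%N) ->
  Chi j.+1 (fun n => if n == nat_of_ord i0 then Th j M j' n - a else Th j M j' n)%N mu = 0.
Proof.
move=> hj ha hi0 hT hne.
have [q [Hq1 [Hq2 Hq3]]] : exists q : nat,
    (q < j.+1)%N /\ q != nat_of_ord i0 /\ Th j M j' q = (Th j M j' i0 - a)%N.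
  have H := ltn_ord i0.
  case: (boolP ((nat_of_ord i0 <= j') && (j' < nat_of_ord i0 + a - 1))%N) => hc.
  - exists (nat_of_ord i0 + a - 1)%N.
    by split; [|split]; move: hc hT hne hi0 H; rewrite /Th; (repeat (case: ifP => ? /=)); move=> *; lia.
  - exists (nat_of_ord i0 + a)%N.
    by split; [|split]; move: hc hT hne hi0 H; rewrite /Th; (repeat (case: ifP => ? /=)); move=> *; lia.
apply: (@Chi_rep _ _ mu i0 (Ordinal Hq1)).
- by apply/eqP => /(f_equal (@nat_of_ord _)) /= E; move: Hq2; rewrite E eqxx.
- by rewrite /= eqxx (negbTE Hq2) Hq3.
Qed.

Lemma hook_closed j mu : all (fun a => 0 < a)%N mu -> forall j', (j' <= j)%N ->
  Chi j.+1 (Th j (sumn mu) j') mu = (Rp mu * Pj j)`_j'.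
Proof.
elim: mu => [|a mu IH] /= Hpos j' Hj'.
  rewrite /Rp big_nil mul1r coef_Pj //.
  rewrite (@Chi_rot j.+1 (fun n => j - n)%N _ _ 0 j') //; last first.
    move=> i; have := ltn_ord i; rewrite /Th /rotn; (repeat (case: ifP => ? /=)); move=> *; lia.
  by rewrite (@Chi_nil_delta j.+1) ?mulr1 // => i.
move/andP: Hpos => [Ha Hpos].
rewrite Chi_cons (bigD1 ord0) /=; last by rewrite /Th /=; lia.
rewrite (@Chi_ext j.+1 (Th j (sumn mu) j')); last first.
  by move=> i; rewrite /Th; (repeat (case: ifP => ? /=)); move=> *; lia.
rewrite IH //.
rewrite /Rp big_cons -/(Rp mu) mulrBl mul1r mulrBl coefB -mulrA (exprNn 'X) -mulrA coef_sign coefXnM.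
case: (leqP a j') => h.
- have Hi1 : (j'.+1 - a < j.+1)%N by lia.
  rewrite (bigD1 (Ordinal Hi1)) /=; last first.
    by apply/andP; split; [rewrite /Th; (repeat (case: ifP => ? /=)); move=> *; lia|
        apply/eqP => /(f_equal (@nat_of_ord _)) /=; lia].
  rewrite big1 ?addr0; last first.
    move=> i0 /andP [/andP [hT hi0] hne]; apply: hook_rep => //.
    rewrite h /=; apply: contra hne => /eqP E; apply/eqP/val_inj; exact: E.
  rewrite (@Chi_rot j.+1 (Th j (sumn mu) (j' - a)) _ _ (j'.+1 - a) a.-1); last first.
      move=> i; have := ltn_ord i; rewrite /rotn; (repeat (case: ifP => ? /=)); rewrite /Th; (repeat (case: ifP => ? /=)); move=> *; lia.
    lia.
  have Ej : (j' - a <= j)%N by lia.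
  rewrite IH //.
  have -> : (-1)^+a = - (-1)^+a.-1 :> int by rewrite -{1}(prednK Ha) exprS mulN1r.
  by rewrite mulNr opprK.
- rewrite big1 ?addr0 ?mulr0 ?subr0 //.
  move=> i0 /andP [hT hi0]; apply: hook_rep => //.
  by rewrite leqNgt h.
Qed.

Local Close Scope ring_scope.

Section Aux.
Local Open Scope ring_scope.

Lemma one_closed mu : Chi 1%N (fun _ => sumn mu) mu = 1.
Proof.
elim: mu => [|a mu IH]; first by apply: Chi_nil_delta => i.
rewrite Chi_cons big_mkcond big_ord_recl big_ord0 /= leq_addr.
rewrite (@Chi_ext 1%N (fun _ => sumn mu)); last by case => [[|i] Hi] //=; lia.
by rewrite IH.
Qed.

Lemma Np0 mu : all (fun a => 0 < a)%N mu -> (Np mu)`_0 = 1.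
Proof.
elim: mu => [|a mu IH] /=; first by rewrite /Np big_nil coef1.
move/andP => [Ha Hp]; rewrite /Np big_cons coef0M -/(Np mu) IH // mulr1.
by rewrite coefD coef1 coefXn; case: a Ha.
Qed.

Lemma Np_cat s1 s2 : Np (s1 ++ s2) = Np s1 * Np s2.
Proof. by rewrite /Np big_cat. Qed.

Lemma Np_sort s : Np (sort geq s) = Np s.
Proof. by rewrite /Np; apply: perm_big; rewrite perm_sort. Qed.

Lemma Rp_sort s : Rp (sort geq s) = Rp s.
Proof. by rewrite /Rp; apply: perm_big; rewrite perm_sort. Qed.

Lemma NpL t : (1 - 'X^2) * Np [seq (2 ^ i.+1)%N | i <- iota 0 t] = 1 - 'X^(2 ^ t.+1).
Proof.
elim: t => [|t IH]; first by rewrite /Np big_nil mulr1.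
rewrite (_ : iota 0 t.+1 = iota 0 t ++ [:: t]); last by rewrite -addn1 iotaD.
rewrite map_cat Np_cat mulrA IH /Np big_seq1 /=.
rewrite [in RHS]expnS mul2n -addnn exprD.
ring.
Qed.

Lemma Rp_odd s : all odd s -> Rp s = Np s.
Proof.
elim: s => [|a s IH] /=; first by rewrite /Rp /Np !big_nil.
move/andP => [Ha Hs]; rewrite /Rp /Np !big_cons -/(Rp s) -/(Np s) IH //.
by rewrite exprNn -signr_odd Ha expr1 mulN1r opprK.
Qed.

Lemma PjE j : (1 + 'X) * Pj j = 1 - (- 'X)^+j.+1.
Proof.
have := subrXX (1 : {poly int}) (-'X) j.+1.
rewrite expr1n opprK => ->; congr (_ * _); apply: eq_bigr => i _.
by rewrite expr1n mul1r.
Qed.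

Lemma sumnL t : (sumn [seq (2 ^ i.+1)%N | i <- iota 0 t] + 2 = 2 ^ t.+1)%N.
Proof.
elim: t => [|t IH] //.
rewrite (_ : iota 0 t.+1 = iota 0 t ++ [:: t]); last by rewrite -addn1 iotaD.
rewrite map_cat sumn_cat /= addn0.
rewrite (expnS 2 t.+1); lia.
Qed.

End Aux.

Theorem theorem1p2 (alpha : seq nat) (t j : nat) :
  is_partition alpha -> all odd alpha ->
  let mu := sort geq (alpha ++ [seq 2 ^ i.+1 | i <- iota 0 t]) in
  let mu' := sort geq (alpha ++ [:: 2 ^ t.+1]) in
  let n := sumn mu in
  (j <= n - j)%N ->
  chi (drop_zero_parts [:: n - j; j]) mu = chi (n + 2 - j :: nseq j 1%N) mu'.
Proof.
move=> Hpart Hodd mu mu' n Hj.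
have Apos : all (fun a => 0 < a)%N alpha by case/andP: Hpart.
set L := [seq 2 ^ i.+1 | i <- iota 0 t].
have Lpos : all (fun a => 0 < a)%N L by apply/allP => x /mapP [i _ ->]; rewrite expn_gt0.
have mupos : all (fun a => 0 < a)%N mu by rewrite /mu all_sort all_cat Apos Lpos.
have mu'pos : all (fun a => 0 < a)%N mu' by rewrite /mu' all_sort all_cat Apos /= expn_gt0.
have ps : forall s : seq nat, perm_eq (sort geq s) s by move=> s; rewrite perm_sort.
have En : n = (sumn alpha + sumn L)%N by rewrite /n /mu (perm_sumn (ps _)) sumn_cat.
have En' : sumn mu' = (n + 2)%N.
  rewrite /mu' (perm_sumn (ps _)) sumn_cat /= addn0 En -addnA.
  by rewrite sumnL.
pose W : {poly int} := ((1 - 'X) * Np mu)%R.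
have W0 : (W`_0)%R = 1%R by rewrite /W coef0M Np0 // coefB coef1 coefX mulr1 subr0.
have LHS : chi (drop_zero_parts [:: n - j; j]) mu = (W`_j)%R.
  case: (posnP j) => [j0|jpos].
  - subst j; rewrite W0 /drop_zero_parts /= subn0.
    case: (posnP n) => [n0|npos].
    + have Emu : mu = [::].
        move: mupos n0; rewrite /n; elim: (mu) => // a s _ /= /andP [ha _]; lia.
      by rewrite chiE Emu; apply: Chi_nil_delta => -[].
    + rewrite chiE /= -(one_closed mu).
      by apply: Chi_ext => -[[|i] Hi] //=; rewrite addn0.
  - have h1 : (0 < n - j)%N by lia.
    rewrite /drop_zero_parts /= h1 jpos /= chiE /=.
    rewrite (@Chi_ext 2%N (T2 n j)); last by case => [[|[|i]] Hi] //=; rewrite /T2 /=; lia.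
    by rewrite two_closed //; lia.
have RHS : chi (n + 2 - j :: nseq j 1%N) mu' = (W`_j)%R.
  rewrite chiE /= size_nseq.
  rewrite (@Chi_ext j.+1 (Th j (n + 2) j)); last first.
    case => [[|i] Hi] /=; rewrite /Th /=; first lia.
    rewrite nth_nseq; (repeat (case: ifP => ? /=)); lia.
  rewrite -En' hook_closed //.
  have Hid : Rp mu' = ((1 + 'X) * W)%R.
    rewrite /mu' Rp_sort /Rp big_cat big_seq1 -/(Rp alpha) Rp_odd // /W /mu Np_sort Np_cat.
    rewrite exprNn -signr_odd oddX /= expr0 mul1r -(NpL t) -/L.
    ring.
  rewrite Hid -mulrA (mulrC W) mulrA PjE.
  by rewrite mulrBl mul1r coefB (exprNn 'X) -mulrA coef_sign coefXnM ltnSn mulr0 subr0.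
by rewrite LHS RHS.
Qed.
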